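(* Let $H$ be a bigraph. Every directed path in the condensation of $H^+$ has at most three vertices.
   Context: A bigraph is a bipartite graph $H$ with fixed bipartition $(B,W)$ (black/white colours). The pair-digraph $H^+$ has vertices all ordered pairs $(u,v)$ of distinct vertices of $H$, and arcs $(u,v)\to(u',v)$ whenever $u,v$ have the same colour, $uu'\in E(H)$, $vu'\notin E(H)$, and $(u,v)\to(u,v')$ whenever $u,v$ have different colours, $vv'\in E(H)$, $uv\notin E(H)$. The condensation of a digraph is obtained by contracting each strong component to a single vertex and deleting loops and multiple arcs. *)

(* Defs.v *)
From HB Require Import structures.
From mathcomp Require Import all_boot.
Set Implicit Arguments. Unset Strict Implicit. Unset Printing Implicit Defensive.

(* A bigraph: vertex set T (finite), colour col (true = black B, false = white W),
   edge relation E which is symmetric and only joins vertices of different colours. *)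
Definition is_bigraph (T : finType) (col : T -> bool) (E : rel T) : Prop :=
  (forall x y, E x y = E y x) /\ (forall x y, E x y -> col x != col y).

Definition pairv (T : finType) := {p : T * T | p.1 != p.2}.

Definition plus_arc (T : finType) (col : T -> bool) (E : rel T) : rel (pairv T) :=
  fun p q =>
    let u := (val p).1 in let v := (val p).2 in
    let u' := (val q).1 in let v' := (val q).2 in
    [|| [&& col u == col v, v' == v, E u u' & ~~ E v u']
      | [&& col u != col v, u' == u, E v v' & ~~ E u v]].

Definition scomp (P : finType) (a : rel P) (x : P) : {set P} :=
  [set y | connect a x y && connect a y x].

Definition is_scomp (P : finType) (a : rel P) (C : {set P}) : bool :=
  [exists x, C == scomp a x].

Definition cond_arc (P : finType) (a : rel P) : rel {set P} :=
  fun C D => (C != D) && [exists x in C, exists y in D, a x y].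

Definition cond_dipath (P : finType) (a : rel P) (s : seq {set P}) : Prop :=
  all (is_scomp a) s /\ uniq s /\ sorted (cond_arc a) s.

(* Main.v *)
Require Import Defs.
From mathcomp Require Import all_boot.

Lemma bneq3 (a b c : bool) : a != b -> b != c -> a == c.
Proof. by case: a; case: b; case: c. Qed.
Arguments bneq3 {a b c}.

Lemma key (T : finType) (col : T -> bool) (E : rel T) :
  is_bigraph col E -> forall w x y z,
  plus_arc col E w x -> plus_arc col E x y -> plus_arc col E y z ->
  connect (plus_arc col E) y x.
Proof.
move=> [Es Ec] [[a b] hab] [[u v] huv] [[u' v'] h'] [[u'' v''] h''].
move=> Hwx Hxy Hyz; rewrite /plus_arc /= in Hwx Hxy Hyz.
have Ecn : forall x y, col x == col y -> ~~ E x y.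
  by move=> x y Hc; apply/negP => /Ec; rewrite Hc.
case: (boolP (col u == col v)) => Hc.
- move: Hxy; rewrite Hc /= orbF => /and3P [/eqP Ev Euu' Nvu']; subst v'.
  case/orP: Hwx => [/and4P [Hab /eqP Eb Eau Nbu]|/and4P [Hab /eqP Ea Ebv Nab]].
    subst b.
    by move: (Ec _ _ Eau); rewrite (eqP Hab) (eqP Hc) eqxx.
  subst a.
  have Hub : u' != b.
    by apply/eqP => Eq; subst u'; move: Nvu'; rewrite Es Ebv.
  have Hcu'v : col u' != col v by rewrite -(eqP Hc) eq_sym Ec.
  have Hcu'b : col u' == col b.
    apply: (@bneq3 _ (col u)); first by rewrite eq_sym Ec.
    by rewrite (eqP Hc); apply: Ec; rewrite Es.
  apply: (@connect_trans _ _ (exist _ (u',b) Hub : pairv T)).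
    apply: connect1; rewrite /plus_arc /=; apply/orP; right.
    by apply/and4P; split; rewrite // Es.
  apply: (@connect_trans _ _ (exist _ (u,b) hab : pairv T)); last first.
    apply: connect1; rewrite /plus_arc /=; apply/orP; right.
    by apply/and4P; split.
  apply: connect1; rewrite /plus_arc /=; apply/orP; left.
  by apply/and4P; split; rewrite // Es.
- move: Hxy; rewrite (negbTE Hc) /= => /and3P [/eqP Eu' Evv' Nuv]; subst u'.
  have Hcuv' : col u == col v'.
    by apply: (@bneq3 _ (col v)) => //; apply: Ec.
  case/orP: (Hyz) => [/and4P [_ /eqP Ev'' Euu'' Nv'u'']|/and4P [Hn _ _ _]];
    last by rewrite Hcuv' in Hn.
  subst v''.
  have Hu''v : u'' != v.
    by apply/eqP => Eq; subst u''; move: Nv'u''; rewrite Es Evv'.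
  have Hcu''u : col u'' != col u by apply: Ec; rewrite Es.
  apply: (@connect_trans _ _ (exist _ (u'',v') h'' : pairv T)).
    exact: connect1.
  apply: (@connect_trans _ _ (exist _ (u'',v) Hu''v : pairv T)).
    apply: connect1; rewrite /plus_arc /=; apply/orP; right.
    apply/and4P; split => //; first by rewrite -(eqP Hcuv').
      by rewrite Es.
    by rewrite Es.
  apply: connect1; rewrite /plus_arc /=; apply/orP; left.
  apply/and4P; split => //; first by apply: (@bneq3 _ (col u)).
    by rewrite Es.
  by rewrite Es.
Qed.

Lemma inarc (P : finType) (e : rel P) a b c :
  e a b -> connect e b c -> exists p, e p c.
Proof.
move=> Hab /connectP [q Hq ->].
case/lastP: q Hq => [|q y]; first by exists a.
by rewrite rcons_path last_rcons => /andP [_ H]; exists (last b q).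
Qed.

Lemma outarc (P : finType) (e : rel P) d x f :
  connect e d x -> e x f -> exists r, e d r.
Proof.
move=> /connectP [q Hq ->] Hf.
case: q Hq Hf => [|y q] /=; first by move=> _ H; exists f.
by move=> /andP [H _] _; exists y.
Qed.

Lemma scomp_eq (P : finType) (e : rel P) x y :
  y \in scomp e x -> scomp e x = scomp e y.
Proof.
rewrite inE => /andP [Hxy Hyx]; apply/setP => z; rewrite !inE.
apply/andP/andP => [[H1 H2]|[H1 H2]]; split.
- exact: connect_trans Hyx H1.
- exact: connect_trans H2 Hxy.
- exact: connect_trans Hxy H1.
- exact: connect_trans H2 Hyx.
Qed.

Arguments key {T col E}.
Arguments inarc {P e a b c}.
Arguments outarc {P e d x f}.
Arguments scomp_eq {P e x y}.

Theorem lemma2p8 (T : finType) (col : T -> bool) (E : rel T) :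
  is_bigraph col E ->
  forall s : seq {set pairv T},
    cond_dipath (plus_arc col E) s -> size s <= 3.
Proof.
move=> HB [|C1 [|C2 [|C3 [|C4 t]]]] [Hall [_ Hs]]; try by [].
move: Hall => /andP [_ /andP [/existsP [x2 /eqP HC2] /andP [/existsP [x3 /eqP HC3] _]]].
move: Hs => /andP [/andP [_ /existsP [a /andP [_ /existsP [b /andP [Hb Hab]]]]]].
move=> /andP [/andP [HC23 /existsP [c /andP [Hc /existsP [d /andP [Hd Hcd]]]]]].
move=> /andP [/andP [_ /existsP [e /andP [He /existsP [f /andP [_ Hef]]]]]] _.
move: (Hb) (Hc) (Hd) (He); rewrite HC2 HC3 !inE.
move=> /andP [Hx2b Hbx2] /andP [Hx2c Hcx2] /andP [Hx3d Hdx3] /andP [Hx3e Hex3].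
have [p Hp] := inarc Hab (connect_trans Hbx2 Hx2c).
have [r Hr] := outarc (connect_trans Hdx3 Hx3e) Hef.
have Hdc := key HB _ _ _ _ Hp Hcd Hr.
have Hd2 : d \in C2.
  rewrite HC2 inE; apply/andP; split.
    exact: connect_trans Hx2c (connect1 Hcd).
  exact: connect_trans Hdc Hcx2.
have E2 : C2 = scomp (plus_arc col E) d by rewrite HC2; apply: scomp_eq; rewrite -HC2.
have E3 : C3 = scomp (plus_arc col E) d by rewrite HC3; apply: scomp_eq; rewrite -HC3.
by move: HC23; rewrite E2 E3 eqxx.
Qed.
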